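(* Let $\mathbb{K}$ be a field of characteristic $2$, let $(A,\cdot,\{-,-\},(-)^{\{2\}})$ be a restricted Poisson algebra, let $k\ge1$, and let $(A^t_k,\cdot,\mu_{(k)},\omega_{(k)})$ be a formal deformation of order $k$ of $A$, where $\mu_{(k)}=\{-,-\}+\sum_{i=1}^kt^i\mu_i$ and $\omega_{(k)}=(-)^{\{2\}}+\sum_{i=1}^kt^i\omega_i$. Let $(\mu_{k+1},\omega_{k+1})\in C^2_{\rm PA}(A)$ and set $\mu_{(k+1)}=\mu_{(k)}+t^{k+1}\mu_{k+1}$, $\omega_{(k+1)}=\omega_{(k)}+t^{k+1}\omega_{k+1}$. Then $(A^t_{k+1},\cdot,\mu_{(k+1)},\omega_{(k+1)})$ is a formal deformation of order $k+1$ of $A$ if and only if $(\mathrm{obs}^{(1)}_{k+1},\mathrm{obs}^{(2)}_{k+1})=\mathrm{d}^2_{\rm PA}(\mu_{k+1},\omega_{k+1})$, where for $x,y,z\in A$, $\mathrm{obs}^{(1)}_{k+1}(x,y,z)=\sum_{i=1}^k\big(\mu_i(x,\mu_{k+1-i}(y,z))+\mu_i(y,\mu_{k+1-i}(z,x))+\mu_i(z,\mu_{k+1-i}(x,y))\big)$ and $\mathrm{obs}^{(2)}_{k+1}(x,y)=\sum_{i=1}^k\big(\mu_i(y,\omega_{k+1-i}(x))+\mu_i(x,\mu_{k+1-i}(x,y))\big)$.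
   Context: $\mathbb{K}$ has characteristic $2$. Restricted Poisson algebra: commutative associative $(A,\cdot)$ with Lie bracket satisfying $\{ab,c\}=a\{b,c\}+b\{a,c\}$, with a map $(-)^{\{2\}}$ making $(A,\{,\})$ a restricted Lie algebra ($(\lambda x)^{\{2\}}=\lambda^2x^{\{2\}}$, $\mathrm{ad}_{x^{\{2\}}}=\mathrm{ad}_x^2$, $(x+y)^{\{2\}}=x^{\{2\}}+y^{\{2\}}+\{x,y\}$) and $(xy)^{\{2\}}=x^2y^{\{2\}}+y^2x^{\{2\}}+xy\{x,y\}$. $\mathfrak{X}^k(A)$: alternating $k$-linear maps $A^k\to A$ that are derivations of $\cdot$ in each argument. For $n\ge2$, $C^n_{\rm PA}(A)$ = pairs $(\varphi,\omega)$ with $\varphi\in\mathfrak{X}^n(A)$, $\omega:A\times A^{n-2}\to A$ alternating multilinear in the last $n-2$ arguments, $\omega(\lambda x,z)=\lambda^2\omega(x,z)$, $\omega(x+y,z)=\omega(x,z)+\omega(y,z)+\varphi(x,y,z)$, $\omega(xy,z)=x^2\omega(y,z)+y^2\omega(x,z)+xy\varphi(x,y,z)$, $\omega(x,..,z_iz_i',..)=z_i\omega(x,..,z_i',..)+z_i'\omega(x,..,z_i,..)$. $\mathrm{d}^2_{\rm PA}(\varphi,\omega)=(\mathrm{d}_{\rm CE}\varphi,\delta^2\omega)$ with $\mathrm{d}_{\rm CE}\varphi(x,y,z)=\varphi(\{x,y\},z)+\varphi(\{x,z\},y)+\varphi(\{y,z\},x)+\{x,\varphi(y,z)\}+\{y,\varphi(x,z)\}+\{z,\varphi(x,y)\}$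 and $\delta^2\omega(x,z)=\{x,\varphi(x,z)\}+\{z,\omega(x)\}+\varphi(x^{\{2\}},z)+\varphi(\{x,z\},x)$. $\mathbb{K}^t_k=\mathbb{K}[t]/(t^{k+1})$, $A^t_k=A\otimes\mathbb{K}^t_k$. A formal deformation of order $k$ is given by $\mu_{(k)},\omega_{(k)}$ as in the claim with all $(\mu_i,\omega_i)\in C^2_{\rm PA}(A)$ such that $(A^t_k,\mu_{(k)},\omega_{(k)})$ is a restricted Lie algebra over $\mathbb{K}^t_k$ (with $\mu_{(k)}$ extended $\mathbb{K}^t_k$-bilinearly and $\omega_{(k)}$ extended by $\omega(\lambda X)=\lambda^2\omega(X)$, $\omega(X+Y)=\omega(X)+\omega(Y)+\mu(X,Y)$). *)

(* Defs.v *)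
From HB Require Import structures.
From mathcomp Require Import all_boot all_order all_algebra.
Set Implicit Arguments. Unset Strict Implicit. Unset Printing Implicit Defensive.
Import GRing.Theory.
Local Open Scope ring_scope.

(* Conventions:
   - A is a K-vector space (lmodType K); the commutative associative product
     is an explicit operation [mul] (no unit required).
   - An element of A^t_n = A (x) K[t]/(t^(n+1)) is represented by its
     coefficient sequence X : nat -> A (X = sum_j t^j X j), only the
     coefficients of index <= n being relevant; equality in A^t_n is [teq n].
     Scalars of K^t_n are likewise sequences nat -> K.
   - Families mu, om : nat -> ... ; index 0 of the deformation is the
     bracket / restricted map of A (see [fam], [famo]). *)

Section Defs.
Variables (K : fieldType) (A : lmodType K).

Definition comm_assoc (mul : A -> A -> A) : Prop :=
  [/\ forall x y z, mul (x + y) z = mul x z + mul y z,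
      forall (a : K) x y, mul (a *: x) y = a *: mul x y,
      forall x y, mul x y = mul y x &
      forall x y z, mul x (mul y z) = mul (mul x y) z].

Definition bilinear_alt (f : A -> A -> A) : Prop :=
  [/\ forall x y z, f (x + y) z = f x z + f y z,
      forall x y z, f x (y + z) = f x y + f x z,
      forall (a : K) x y, f (a *: x) y = a *: f x y,
      forall (a : K) x y, f x (a *: y) = a *: f x y &
      forall x, f x x = 0].

Definition lie_bracket (br : A -> A -> A) : Prop :=
  bilinear_alt br /\
  forall x y z, br x (br y z) + br y (br z x) + br z (br x y) = 0.

(* restricted Lie algebra (A, br, p) over K in characteristic 2;
   ad_{p x} = ad_x^2 is  br (p x) y = br x (br x y) for all y *)
Definition restricted_lie (br : A -> A -> A) (p : A -> A) : Prop :=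
  [/\ lie_bracket br,
      forall (a : K) x, p (a *: x) = a ^+ 2 *: p x,
      forall x y, br (p x) y = br x (br x y) &
      forall x y, p (x + y) = p x + p y + br x y].

Definition restricted_poisson (mul br : A -> A -> A) (p : A -> A) : Prop :=
  [/\ comm_assoc mul, restricted_lie br p,
      forall a b c, br (mul a b) c = mul a (br b c) + mul b (br a c) &
      forall x y, p (mul x y) =
        mul (mul x x) (p y) + mul (mul y y) (p x) + mul (mul x y) (br x y)].

Definition multider2 (mul : A -> A -> A) (phi : A -> A -> A) : Prop :=
  [/\ bilinear_alt phi,
      forall a b c, phi (mul a b) c = mul a (phi b c) + mul b (phi a c) &
      forall a b c, phi c (mul a b) = mul a (phi c b) + mul b (phi c a)].

Definition C2PA (mul : A -> A -> A) (phi : A -> A -> A) (om : A -> A) : Prop :=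
  [/\ multider2 mul phi,
      forall (a : K) x, om (a *: x) = a ^+ 2 *: om x,
      forall x y, om (x + y) = om x + om y + phi x y &
      forall x y, om (mul x y) =
        mul (mul x x) (om y) + mul (mul y y) (om x) + mul (mul x y) (phi x y)].

Definition teq (n : nat) (X Y : nat -> A) : Prop :=
  forall m, (m <= n)%N -> X m = Y m.

Definition tzero : nat -> A := fun _ => 0.

Definition tadd (X Y : nat -> A) : nat -> A := fun m => X m + Y m.

Definition tmulK (l l' : nat -> K) : nat -> K :=
  fun m => \sum_(a < m.+1) l a * l' (m - a)%N.

Definition tscale (l : nat -> K) (X : nat -> A) : nat -> A :=
  fun m => \sum_(a < m.+1) l a *: X (m - a)%N.

Definition tbr (F : nat -> A -> A -> A) (X Y : nat -> A) : nat -> A :=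
  fun m => \sum_(i < m.+1) \sum_(j < (m - i).+1) F i (X j) (Y (m - i - j)%N).

(* extension of  sum_i t^i G i  to A^t_n by omega(lambda X) = lambda^2 omega(X),
   omega(X+Y) = omega(X) + omega(Y) + mu(X,Y), where mu = tbr F:
   omega(sum_j t^j X_j) = sum_j t^(2j) omega(X_j) + sum_(j<l) t^(j+l) mu(X_j,X_l) *)
Definition tom (F : nat -> A -> A -> A) (G : nat -> A -> A) (X : nat -> A)
  : nat -> A :=
  fun m => \sum_(j < m.+1 | (2 * j <= m)%N) G (m - 2 * j)%N (X j)
         + \sum_(i < m.+1) \sum_(j < (m - i).+1 | (j < m - i - j)%N)
              F i (X j) (X (m - i - j)%N).

Definition restricted_lie_trunc (n : nat)
  (mu : (nat -> A) -> (nat -> A) -> (nat -> A)) (om : (nat -> A) -> (nat -> A))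
  : Prop :=
  (forall X Y Z, teq n (mu (tadd X Y) Z) (tadd (mu X Z) (mu Y Z))) /\
  (forall X Y Z, teq n (mu X (tadd Y Z)) (tadd (mu X Y) (mu X Z))) /\
  (forall l X Y, teq n (mu (tscale l X) Y) (tscale l (mu X Y))) /\
  (forall l X Y, teq n (mu X (tscale l Y)) (tscale l (mu X Y))) /\
  (forall X, teq n (mu X X) tzero) /\
  (forall X Y Z, teq n (tadd (tadd (mu X (mu Y Z)) (mu Y (mu Z X))) (mu Z (mu X Y)))
                       tzero) /\
  (forall l X, teq n (om (tscale l X)) (tscale (tmulK l l) (om X))) /\
  (forall X Y, teq n (om (tadd X Y)) (tadd (tadd (om X) (om Y)) (mu X Y))) /\
  (forall X Y, teq n (mu (om X) Y) (mu X (mu X Y))).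

Definition fam (br : A -> A -> A) (mu : nat -> A -> A -> A) : nat -> A -> A -> A :=
  fun i => if i == 0%N then br else mu i.

Definition famo (p : A -> A) (om : nat -> A -> A) : nat -> A -> A :=
  fun i => if i == 0%N then p else om i.

Definition formal_deformation (mul br : A -> A -> A) (p : A -> A)
  (mu : nat -> A -> A -> A) (om : nat -> A -> A) (n : nat) : Prop :=
  (forall i, (1 <= i <= n)%N -> C2PA mul (mu i) (om i)) /\
  restricted_lie_trunc n (tbr (fam br mu)) (tom (fam br mu) (famo p om)).

Definition obs1 (mu : nat -> A -> A -> A) (k : nat) (x y z : A) : A :=
  \sum_(1 <= i < k.+1)
     (mu i x (mu (k.+1 - i)%N y z) + mu i y (mu (k.+1 - i)%N z x)
      + mu i z (mu (k.+1 - i)%N x y)).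

Definition obs2 (mu : nat -> A -> A -> A) (om : nat -> A -> A) (k : nat) (x y : A) : A :=
  \sum_(1 <= i < k.+1)
     (mu i y (om (k.+1 - i)%N x) + mu i x (mu (k.+1 - i)%N x y)).

Definition dCE (br phi : A -> A -> A) (x y z : A) : A :=
  phi (br x y) z + phi (br x z) y + phi (br y z) x
  + br x (phi y z) + br y (phi x z) + br z (phi x y).

Definition delta2 (br : A -> A -> A) (p : A -> A) (phi : A -> A -> A) (om : A -> A)
  (x z : A) : A :=
  br x (phi x z) + br z (om x) + phi (p x) z + phi (br x z) x.

End Defs.

(* Main.v *)
Require Import Defs.
From HB Require Import structures.
From mathcomp Require Import all_boot all_order all_algebra.
From mathcomp Require Import zify.
Set Implicit Arguments. Unset Strict Implicit. Unset Printing Implicit Defensive.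
Import GRing.Theory.
Local Open Scope ring_scope.

Section Gen.
Variables (K : fieldType) (A : lmodType K).
Hypothesis Hc2 : (2%:R : K) = 0.

Lemma addxxA (x : A) : x + x = 0.
Proof. by rewrite -mulr2n -scaler_nat Hc2 scale0r. Qed.
Lemma oppA (x : A) : - x = x.
Proof. by apply/eqP; rewrite eq_sym -subr_eq0 opprK addxxA. Qed.
Lemma addxxK (c : K) : c + c = 0.
Proof. by rewrite -mulr2n -mulr_natr Hc2 mulr0. Qed.
Lemma addA_eq0 (x y : A) : (x + y = 0) <-> x = y.
Proof. split=> [h|->]; last exact: addxxA.
by apply/eqP; rewrite -subr_eq0 oppA h. Qed.

Lemma ac4 (p q r s : A) : (p + q) + (r + s) = p + s + (q + r).
Proof. by rewrite [r + s]addrC addrACA. Qed.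
Lemma ac6 (a b c d e f : A) : a + b + c + (d + e + f) = a + d + (b + e) + (f + c).
Proof. by rewrite addrACA [a + b + _]addrACA [c + f]addrC. Qed.

Lemma ac7 (a b t p q r s : A) :
  a + b + t + (p + q + (r + s)) = a + p + (b + s) + (q + r + t).
Proof.
rewrite [p + q + _]addrACA -!addrA; congr (_ + _).
rewrite (addrCA t p) (addrCA b p); congr (_ + (_ + _)).
rewrite (addrC q s) (addrCA r s) (addrCA t s); congr (_ + _).
by rewrite (addrC r q) (addrCA t q) (addrC t r).
Qed.
Lemma ac6b (a1 a2 b1 b2 c1 c2 : A) :
  a1 + a2 + (b1 + b2) + (c1 + c2) = a1 + b1 + c1 + (a2 + b2 + c2).
Proof. by rewrite [a1 + a2 + _]addrACA (addrACA (a1 + b1) (a2 + b2) c1 c2). Qed.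

Section BA.
Variable f : A -> A -> A.
Hypothesis hf : bilinear_alt f.
Lemma ba_addl x y z : f (x + y) z = f x z + f y z. Proof. by case: hf. Qed.
Lemma ba_addr x y z : f x (y + z) = f x y + f x z. Proof. by case: hf. Qed.
Lemma ba_scll a x y : f (a *: x) y = a *: f x y. Proof. by case: hf. Qed.
Lemma ba_sclr a x y : f x (a *: y) = a *: f x y. Proof. by case: hf. Qed.
Lemma ba_alt x : f x x = 0. Proof. by case: hf. Qed.
Lemma ba_0l y : f 0 y = 0.
Proof. by have := ba_scll 0 0 y; rewrite !scale0r. Qed.
Lemma ba_0r y : f y 0 = 0.
Proof. by have := ba_sclr 0 y 0; rewrite !scale0r. Qed.
Lemma ba_sym x y : f x y = f y x.
Proof.
have := ba_alt (x + y); rewrite ba_addl !ba_addr !ba_alt add0r addr0.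
by move/addA_eq0.
Qed.
Lemma ba_suml I r (P : pred I) (g : I -> A) y :
  f (\sum_(i <- r | P i) g i) y = \sum_(i <- r | P i) f (g i) y.
Proof. by apply: (big_morph (fun x => f x y)) => [a b|]; rewrite ?ba_addl ?ba_0l. Qed.
Lemma ba_sumr I r (P : pred I) (g : I -> A) y :
  f y (\sum_(i <- r | P i) g i) = \sum_(i <- r | P i) f y (g i).
Proof. by apply: (big_morph (fun x => f y x)) => [a b|]; rewrite ?ba_addr ?ba_0r. Qed.
End BA.


Lemma ordle (m : nat) (i : 'I_m.+1) : (i <= m)%N.
Proof. by rewrite -ltnS. Qed.

Definition sh (U : nat -> A) : nat -> A := fun j => if j is j'.+1 then U j' else 0.
Definition c0 (x : A) : nat -> A := fun j => if j is 0%N then x else 0.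
Definition tsc (c : K) (U : nat -> A) : nat -> A := fun j => c *: U j.


Lemma tri_widen (f : nat -> A) M a : (a <= M)%N ->
  \sum_(b < (M - a).+1) f b = \sum_(b < M.+1 | (a + b <= M)%N) f b.
Proof.
move=> ha; rewrite (big_ord_widen M.+1); last by lia.
by apply: eq_bigl => b; lia.
Qed.

Lemma tri_swap (f : nat -> nat -> A) M :
  \sum_(a < M.+1) \sum_(b < (M - a).+1) f a b =
  \sum_(b < M.+1) \sum_(a < (M - b).+1) f a b.
Proof.
rewrite (eq_bigr _ (fun (a : 'I_M.+1) _ => tri_widen (f a) (ordle a))).
rewrite [RHS](eq_bigr _ (fun (b : 'I_M.+1) _ => tri_widen (f ^~ b) (ordle b))).
under eq_bigr do rewrite big_mkcond.
rewrite exchange_big; apply: eq_bigr => b _; rewrite [RHS]big_mkcond.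
by apply: eq_bigr => a _; rewrite addnC.
Qed.

Lemma split_half (f : nat -> nat -> A) M :
  \sum_(j < M.+1) f j (M - j)%N =
  \sum_(j < M.+1 | (j < M - j)%N) (f j (M - j)%N + f (M - j)%N j)
  + \sum_(j < M.+1 | j == (M - j)%N :> nat) f j (M - j)%N.
Proof.
rewrite (bigID (fun j : 'I_M.+1 => (j < M - j)%N)) /= big_split /= -addrA.
congr (_ + _).
rewrite (bigID (fun j : 'I_M.+1 => j == (M - j)%N :> nat)) /= addrC.
congr (_ + _).
  rewrite (reindex_inj rev_ord_inj) /=; apply: eq_big => j.
    by have := ltn_ord j; lia.
  by move=> _; have hj := ltn_ord j; congr (f _ _); lia.
by apply: eq_bigl => j; have := ltn_ord j; lia.
Qed.


Lemma teq_le m j (X Y : nat -> A) : teq m X Y -> (j <= m)%N -> teq j X Y.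
Proof. by move=> h hj k hk; apply: h; lia. Qed.

Lemma sh_congr m (U V : nat -> A) : teq m U V -> teq m (sh U) (sh V).
Proof. by move=> h [|j] hj //=; apply: h; lia. Qed.

Lemma decomp m (X : nat -> A) : teq m X (tadd (c0 (X 0%N)) (sh (fun j => X j.+1))).
Proof. by move=> [|j] _; rewrite /tadd /= ?addr0 ?add0r. Qed.

Lemma tscale_decomp (l : nat -> K) (X : nat -> A) m :
  tscale l X m = l 0%N *: X m + sh (tscale (fun j => l j.+1) X) m.
Proof.
rewrite /tscale big_ord_recl /= subn0; congr (_ + _).
case: m => [|m]; first by rewrite big_ord0.
by apply: eq_bigr => a _; rewrite /bump /= subSS.
Qed.

Lemma tscale_congr (l l' : nat -> K) (U V : nat -> A) m :
  (forall j, (j <= m)%N -> l j = l' j) -> teq m U V -> tscale l U m = tscale l' V m.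
Proof.
move=> hl hU; rewrite /tscale; apply: eq_bigr => a _.
rewrite hl ?hU //; have := ltn_ord a; lia.
Qed.

Lemma tscale0 (l : nat -> K) (U : nat -> A) m :
  (forall j, (j <= m)%N -> U j = 0) -> tscale l U m = 0.
Proof.
move=> hU; rewrite /tscale big1 // => a _; rewrite hU ?scaler0 //.
have := ltn_ord a; lia.
Qed.

Lemma tmulK_sq (l : nat -> K) j :
  tmulK l l j.+1 = if j is j'.+1 then tmulK (fun i => l i.+1) (fun i => l i.+1) j'
                   else 0.
Proof.
rewrite /tmulK big_ord_recl big_ord_recr /= subn0 subnn.
rewrite /bump /= [X in _ + X]addrC addrA [l j.+1 * _]mulrC addxxK add0r.
case: j => [|j]; first by rewrite big_ord0.
apply: eq_bigr => a _; rewrite /bump /=.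
have ha := ltn_ord a.
congr (_ * l _); lia.
Qed.

Section Seq.
Variables (n : nat) (F : nat -> A -> A -> A) (G : nat -> A -> A).
Hypothesis HF : forall i, (i <= n)%N -> bilinear_alt (F i).
Hypothesis HGs : forall i, (i <= n)%N -> forall (a : K) x, G i (a *: x) = a ^+ 2 *: G i x.
Hypothesis HGa : forall i, (i <= n)%N -> forall x y, G i (x + y) = G i x + G i y + F i x y.

Lemma G0 i : (i <= n)%N -> G i 0 = 0.
Proof. by move=> hi; have := HGs hi 0 0; rewrite !scale0r expr0n /= scale0r. Qed.

Ltac bnd := repeat match goal with
  | i : _ |- _ => lazymatch goal with
     | _ : is_true (nat_of_ord i < _)%N |- _ => fail
     | _ => have := @ltn_ord _ i; move=> ? end end; lia.

Lemma tbr_addl X Y Z m : (m <= n)%N ->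
  tbr F (tadd X Y) Z m = tbr F X Z m + tbr F Y Z m.
Proof.
move=> hm; rewrite /tbr /tadd -big_split; apply: eq_bigr => i _.
rewrite -big_split; apply: eq_bigr => j _; rewrite ba_addl //; apply: HF.
bnd.
Qed.

Lemma tbr_addr X Y Z m : (m <= n)%N ->
  tbr F X (tadd Y Z) m = tbr F X Y m + tbr F X Z m.
Proof.
move=> hm; rewrite /tbr /tadd -big_split; apply: eq_bigr => i _.
rewrite -big_split; apply: eq_bigr => j _; rewrite ba_addr //; apply: HF; bnd.
Qed.

Lemma tbr_sym X Y m : (m <= n)%N -> tbr F X Y m = tbr F Y X m.
Proof.
move=> hm; rewrite /tbr; apply: eq_bigr => i _.
rewrite (reindex_inj rev_ord_inj) /=; apply: eq_bigr => j _.
rewrite ba_sym; last by apply: HF; bnd.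
have hj := ltn_ord j; have hi := ltn_ord i.
congr (F _ (Y _) (X _)); lia.
Qed.

Lemma tbr_c0l x W m : (m <= n)%N ->
  tbr F (c0 x) W m = \sum_(i < m.+1) F i x (W (m - i)%N).
Proof.
move=> hm; rewrite /tbr; apply: eq_bigr => i _.
rewrite big_ord_recl /= subn0 big1 ?addr0 // => j _.
by rewrite ba_0l //; apply: HF; bnd.
Qed.

Lemma tbr_c0r x W m : (m <= n)%N ->
  tbr F W (c0 x) m = \sum_(i < m.+1) F i (W (m - i)%N) x.
Proof.
move=> hm; rewrite tbr_sym // tbr_c0l //; apply: eq_bigr => i _.
by rewrite ba_sym //; apply: HF; bnd.
Qed.

Lemma tbr_c0c0 x y m : (m <= n)%N -> tbr F (c0 x) (c0 y) m = F m x y.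
Proof.
move=> hm; rewrite tbr_c0l // big_ord_recr /= subnn big1 ?add0r // => i _.
rewrite /c0; case E: (m - widen_ord (leqnSn m) i)%N => [|k].
  by move: E (ltn_ord i) => /=; lia.
by rewrite ba_0r //; apply: HF; bnd.
Qed.

Lemma tom_c0 x m : (m <= n)%N -> tom F G (c0 x) m = G m x.
Proof.
move=> hm; rewrite /tom big_mkcond big_ord_recl /= muln0 subn0.
rewrite big1 ?addr0; last first.
  by move=> j _; rewrite G0 ?if_same //; bnd.
rewrite [X in _ + X]big1 ?addr0 // => i _; apply: big1 => j hj.
rewrite /c0; case: (nat_of_ord j) hj => [|j'] hj.
  case E: (m - i - 0)%N => [|k]; first by move: hj; rewrite E.
  by rewrite ba_0r //; apply: HF; bnd.
by rewrite ba_0l //; apply: HF; bnd.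
Qed.


Lemma tbr_congr X X' Y Y' m : teq m X X' -> teq m Y Y' ->
  tbr F X Y m = tbr F X' Y' m.
Proof.
move=> hX hY; rewrite /tbr; apply: eq_bigr => i _; apply: eq_bigr => j _.
by rewrite hX ?hY //; bnd.
Qed.

Lemma tbr_scl c X Y m : (m <= n)%N -> tbr F (tsc c X) Y m = c *: tbr F X Y m.
Proof.
move=> hm; rewrite /tbr /tsc scaler_sumr; apply: eq_bigr => i _.
rewrite scaler_sumr; apply: eq_bigr => j _; rewrite ba_scll //; apply: HF; bnd.
Qed.

Lemma tbr_shl X Y m : (m <= n)%N -> tbr F (sh X) Y m = sh (tbr F X Y) m.
Proof.
case: m => [|m] hm.
  by rewrite /tbr big_ord1 /= big_ord1 /= ba_0l //; apply: HF.
rewrite /tbr big_ord_recr /= subnn big_ord1 /= ba_0l ?addr0; last by apply: HF.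
apply: eq_bigr => i _ /=; rewrite subSn ?ordle // big_ord_recl /= ba_0l ?add0r;
  last by apply: HF; bnd.
apply: eq_bigr => j _; rewrite /bump /=; congr (F _ _ (Y _)); bnd.
Qed.

Lemma half_sh (f : A -> A -> A) (hf0 : forall y, f 0 y = 0) X M :
  \sum_(j < M.+1 | (j < M - j)%N) f (sh X j) (sh X (M - j)%N) =
  if M is M'.+2 then \sum_(j < M'.+1 | (j < M' - j)%N) f (X j) (X (M' - j)%N)
  else 0.
Proof.
rewrite big_mkcond big_ord_recl /= hf0 if_same add0r.
case: M => [|[|M]]; first by rewrite big_ord0.
  by rewrite big_ord1.
rewrite big_ord_recr /bump /= ifF ?addr0; last by apply/negbTE; lia.
rewrite [RHS]big_mkcond; apply: eq_bigr => j _; rewrite /bump /=.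
have hj := ltn_ord j.
have -> : (j.+1 < M.+2 - j.+1)%N = (j < M - j)%N by lia.
case: ifP => // hc; rewrite subSS subSn //; bnd.
Qed.

Lemma gpart_sh (g : nat -> A -> A) X m (hg0 : forall i, (i <= m)%N -> g i 0 = 0) :
  \sum_(j < m.+1 | (2 * j <= m)%N) g (m - 2 * j)%N (sh X j) =
  if m is m'.+2 then \sum_(j < m'.+1 | (2 * j <= m')%N) g (m' - 2 * j)%N (X j)
  else 0.
Proof.
rewrite big_mkcond big_ord_recl /= hg0 ?leq_subr // add0r /bump /=.
case: m hg0 => [|[|m]] hg0; first by rewrite big_ord0.
  by rewrite big_ord1.
rewrite big_ord_recr /= ifF ?addr0; last by apply/negbTE; lia.
rewrite [RHS]big_mkcond; apply: eq_bigr => j _; rewrite /bump /=.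
have hj := ltn_ord j.
have -> : (2 * j.+1 <= m.+2)%N = (2 * j <= m)%N by lia.
case: ifP => // hc; congr (g _ _); lia.
Qed.

Lemma tom_sh X m : (m <= n)%N -> tom F G (sh X) m = sh (sh (tom F G X)) m.
Proof.
move=> hm; rewrite /tom gpart_sh; last by move=> i hi; apply: G0; lia.
have E : forall i : 'I_m.+1,
   \sum_(j < (m - i).+1 | (j < m - i - j)%N) F i (sh X j) (sh X (m - i - j)%N) =
   if (m - i)%N is M'.+2 then \sum_(j < M'.+1 | (j < M' - j)%N) F i (X j) (X (M' - j)%N)
   else 0.
  by move=> i; apply: half_sh => y; apply: ba_0l; apply: HF; bnd.
rewrite (eq_bigr _ (fun i _ => E i)).
case: m hm E => [|[|m]] hm E.
- by rewrite big_ord1 /= addr0.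
- by rewrite big_ord_recr big_ord1 /= !addr0.
rewrite big_ord_recr /= subnn addr0 big_ord_recr /= subSnn addr0 /=.
congr (_ + _); apply: eq_bigr => i _ /=.
have hi := ordle i.
have -> : (m.+2 - i = (m - i).+2)%N by lia.
done.
Qed.


Lemma diag_sum (X Y : nat -> A) m : (m <= n)%N ->
  \sum_(i < m.+1) \sum_(j < (m - i).+1 | j == (m - i - j)%N :> nat)
     F i (X j) (Y (m - i - j)%N) =
  \sum_(j < m.+1 | (2 * j <= m)%N) F (m - 2 * j)%N (X j) (Y j).
Proof.
move=> hm.
under eq_bigr do rewrite big_mkcond.
rewrite (tri_swap (fun i j => if j == (m - i - j)%N :> nat then
   F i (X j) (Y (m - i - j)%N) else 0)).
rewrite [RHS]big_mkcond; apply: eq_bigr => j _.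
rewrite -big_mkcond /=.
rewrite (eq_bigl (fun i : 'I_(m - j).+1 => (2 * j <= m)%N && (i == (m - 2 * j)%N :> nat))).
  rewrite (big_ord1_cond_eq _ (fun i => F i (X j) (Y (m - i - j)%N)) (fun _ => (2 * j <= m)%N)).
  have hj := ltn_ord j.
  case h2: (2 * j <= m)%N; rewrite ?andbF ?andbT //.
  rewrite ifT; last by lia.
  congr (F _ _ (Y _)); lia.
by move=> i; have := ltn_ord j; have := ltn_ord i; lia.
Qed.

Lemma tom_add X Y m : (m <= n)%N ->
  tom F G (tadd X Y) m = tom F G X m + tom F G Y m + tbr F X Y m.
Proof.
move=> hm.
have HG : \sum_(j < m.+1 | (2 * j <= m)%N) G (m - 2 * j)%N (tadd X Y j) =
   \sum_(j < m.+1 | (2 * j <= m)%N) G (m - 2 * j)%N (X j)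
 + \sum_(j < m.+1 | (2 * j <= m)%N) G (m - 2 * j)%N (Y j)
 + \sum_(j < m.+1 | (2 * j <= m)%N) F (m - 2 * j)%N (X j) (Y j).
  rewrite -!big_split; apply: eq_bigr => j _; rewrite /tadd HGa //; lia.
have HFp : forall i : 'I_m.+1,
  \sum_(j < (m - i).+1 | (j < m - i - j)%N) F i (tadd X Y j) (tadd X Y (m - i - j)%N) =
  \sum_(j < (m - i).+1 | (j < m - i - j)%N) F i (X j) (X (m - i - j)%N)
 + \sum_(j < (m - i).+1 | (j < m - i - j)%N) F i (Y j) (Y (m - i - j)%N)
 + \sum_(j < (m - i).+1 | (j < m - i - j)%N)
      (F i (X j) (Y (m - i - j)%N) + F i (Y j) (X (m - i - j)%N)).
  move=> i; rewrite -!big_split; apply: eq_bigr => j _.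
  have hF : bilinear_alt (F i) by apply: HF; bnd.
  rewrite /tadd (ba_addl hF) !(ba_addr hF); exact: ac4.
have HT : tbr F X Y m =
   \sum_(i < m.+1) \sum_(j < (m - i).+1 | (j < m - i - j)%N)
      (F i (X j) (Y (m - i - j)%N) + F i (Y j) (X (m - i - j)%N))
 + \sum_(j < m.+1 | (2 * j <= m)%N) F (m - 2 * j)%N (X j) (Y j).
  rewrite -diag_sum // -big_split; apply: eq_bigr => i _.
  rewrite (split_half (fun j k => F i (X j) (Y k))); congr (_ + _).
  apply: eq_bigr => j _; congr (_ + _).
  rewrite ba_sym //; apply: HF; bnd.
rewrite /tom HG (eq_bigr _ (fun i _ => HFp i)) HT !big_split /=.
by rewrite ac6.
Qed.


Lemma tom_congr X X' m : teq m X X' -> tom F G X m = tom F G X' m.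
Proof.
move=> h; rewrite /tom; congr (_ + _).
  by apply: eq_bigr => j _; rewrite h //; bnd.
apply: eq_bigr => i _; apply: eq_bigr => j _; rewrite !h //; bnd.
Qed.

Lemma tom_zero X m : (m <= n)%N -> (forall j, (j <= m)%N -> X j = 0) ->
  tom F G X m = 0.
Proof.
move=> hm h; rewrite /tom big1 ?add0r.
  apply: big1 => i _; apply: big1 => j _; rewrite h; last by bnd.
  by rewrite ba_0l //; apply: HF; bnd.
by move=> j _; rewrite h ?G0 //; bnd.
Qed.

Lemma tom_scl c X m : (m <= n)%N -> tom F G (tsc c X) m = c ^+ 2 *: tom F G X m.
Proof.
move=> hm; rewrite /tom /tsc scalerDr !scaler_sumr; congr (_ + _).
  by apply: eq_bigr => j _; rewrite HGs //; bnd.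
apply: eq_bigr => i _; rewrite scaler_sumr; apply: eq_bigr => j _.
have hF : bilinear_alt (F i) by apply: HF; bnd.
by rewrite (ba_scll hF) (ba_sclr hF) scalerA expr2.
Qed.

Lemma teq_tbr_addl X Y Z : teq n (tbr F (tadd X Y) Z) (tadd (tbr F X Z) (tbr F Y Z)).
Proof. by move=> m hm; rewrite tbr_addl. Qed.
Lemma teq_tbr_addr X Y Z : teq n (tbr F X (tadd Y Z)) (tadd (tbr F X Y) (tbr F X Z)).
Proof. by move=> m hm; rewrite tbr_addr. Qed.
Lemma teq_tbr_sym X Y : teq n (tbr F X Y) (tbr F Y X).
Proof. by move=> m hm; rewrite tbr_sym. Qed.
Lemma teq_tbr_shl X Y : teq n (tbr F (sh X) Y) (sh (tbr F X Y)).
Proof. by move=> m hm; rewrite tbr_shl. Qed.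

Lemma tbr_shr X Y m : (m <= n)%N -> tbr F X (sh Y) m = sh (tbr F X Y) m.
Proof.
move=> hm; rewrite tbr_sym // tbr_shl //.
by apply: sh_congr (teq_le (teq_tbr_sym Y X) hm) _ _.
Qed.
Lemma teq_tbr_shr X Y : teq n (tbr F X (sh Y)) (sh (tbr F X Y)).
Proof. by move=> m hm; rewrite tbr_shr. Qed.

Lemma tbr_congr' X X' Y Y' m : (m <= n)%N -> teq n X X' -> teq n Y Y' ->
  tbr F X Y m = tbr F X' Y' m.
Proof. by move=> hm hX hY; apply: tbr_congr; apply: teq_le hm. Qed.

Lemma tbr_tscale l X Y m : (m <= n)%N ->
  tbr F (tscale l X) Y m = tscale l (tbr F X Y) m.
Proof.
elim: m l X Y => [|m IH] l X Y hm;
  have E := @tbr_congr (tscale l X) (tadd (tsc (l 0%N) X) (sh (tscale (fun j => l j.+1) X))) Y Y;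
  (rewrite E; last by []; last by move=> j hj; rewrite tscale_decomp);
  rewrite tbr_addl // tbr_scl // tbr_shl // tscale_decomp //.
by rewrite /= IH //; lia.
Qed.

Lemma tbr_tscaler l X Y m : (m <= n)%N ->
  tbr F X (tscale l Y) m = tscale l (tbr F X Y) m.
Proof.
move=> hm; rewrite tbr_sym // tbr_tscale //; apply: tscale_congr => // j hj.
by rewrite tbr_sym //; lia.
Qed.

Lemma tbr_alt X m : (m <= n)%N -> tbr F X X m = 0.
Proof.
move=> hm; have := tom_add X X hm.
rewrite tom_zero // ?addxxA ?add0r // => j hj; exact: addxxA.
Qed.


Lemma teq_refl m (X : nat -> A) : teq m X X. Proof. by []. Qed.

Lemma tom_tscale l X m : (m <= n)%N ->
  tom F G (tscale l X) m = tscale (tmulK l l) (tom F G X) m.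
Proof.
elim/ltn_ind: m l X => m IH l X hm.
set l' := fun j => l j.+1; set W := tscale l' X.
rewrite (@tom_congr _ (tadd (tsc (l 0%N) X) (sh W))); last first.
  by move=> j _; rewrite tscale_decomp.
rewrite tom_add // tom_scl // tom_sh // tbr_scl // tbr_shr //.
have -> : sh (tbr F X W) m = 0.
  case: m IH hm => [|m] IH hm //=.
  rewrite tbr_tscaler; last by lia.
  by apply: tscale0 => j hj; apply: tbr_alt; lia.
rewrite scaler0 addr0 tscale_decomp.
have -> : tmulK l l 0%N = l 0%N ^+ 2 by rewrite /tmulK big_ord1 /= expr2.
congr (_ + _).
case: m IH hm => [|m] IH hm //=.
rewrite tscale_decomp tmulK_sq scale0r add0r.
case: m IH hm => [|m] IH hm //=.
rewrite /W IH //; last by lia.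
by apply: tscale_congr => // j hj; rewrite tmulK_sq.
Qed.

Definition Jac X Y Z m :=
  tbr F X (tbr F Y Z) m + tbr F Y (tbr F Z X) m + tbr F Z (tbr F X Y) m.
Definition Jc s x y z := \sum_(i < s.+1)
  (F i x (F (s - i)%N y z) + F i y (F (s - i)%N z x) + F i z (F (s - i)%N x y)).

Lemma Jac_cyc X Y Z m : Jac X Y Z m = Jac Y Z X m.
Proof. by rewrite /Jac -[in LHS]addrA [in LHS]addrC. Qed.

Lemma Jac_congr X X' Y Z m : (m <= n)%N -> teq n X X' -> Jac X Y Z m = Jac X' Y Z m.
Proof.
move=> hm h; rewrite /Jac; congr (_ + _ + _); apply: tbr_congr' => //.
  by move=> j hj; apply: tbr_congr' => //.
by move=> j hj; apply: tbr_congr' => //.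
Qed.

Lemma Jac_add U V Y Z m : (m <= n)%N ->
  Jac (tadd U V) Y Z m = Jac U Y Z m + Jac V Y Z m.
Proof.
move=> hm; rewrite /Jac tbr_addl //.
rewrite (tbr_congr' (X := Y) (X' := Y) (Y := tbr F Z (tadd U V)) (Y' := tadd (tbr F Z U) (tbr F Z V))) //; last exact: teq_tbr_addr.
rewrite (tbr_congr' (X := Z) (X' := Z) (Y := tbr F (tadd U V) Y) (Y' := tadd (tbr F U Y) (tbr F V Y))) //; last exact: teq_tbr_addl.
by rewrite !tbr_addr // ac6b.
Qed.

Lemma Jac_sh U Y Z m : (m <= n)%N ->
  Jac (sh U) Y Z m = sh (fun j => Jac U Y Z j) m.
Proof.
move=> hm; rewrite /Jac tbr_shl //.
rewrite (tbr_congr' (X := Y) (X' := Y) (Y := tbr F Z (sh U)) (Y' := sh (tbr F Z U))) //; last exact: teq_tbr_shr.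
rewrite (tbr_congr' (X := Z) (X' := Z) (Y := tbr F (sh U) Y) (Y' := sh (tbr F U Y))) //; last exact: teq_tbr_shl.
by rewrite !tbr_shr //; case: (m) => [|j] /=; rewrite ?addr0.
Qed.

Lemma Jac_c0 x y z m : (m <= n)%N ->
  Jac (c0 x) (c0 y) (c0 z) m = Jc m x y z.
Proof.
move=> hm; rewrite /Jac /Jc !tbr_c0l // -!big_split; apply: eq_bigr => i _ /=.
by rewrite !tbr_c0c0 //; bnd.
Qed.

Hypothesis HJ : forall s, (s <= n)%N -> forall x y z, Jc s x y z = 0.

Lemma Jac_zero m : (m <= n)%N -> forall X Y Z, Jac X Y Z m = 0.
Proof.
elim: m => [|m IH] hm X Y Z.
1: have S : forall U Y Z, Jac (sh U) Y Z 0 = 0 by move=> U Y' Z'; rewrite Jac_sh.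
2: have S : forall U Y Z, Jac (sh U) Y Z m.+1 = 0
     by move=> U Y' Z'; rewrite Jac_sh //=; apply: IH; lia.
all: rewrite (Jac_congr _ _ hm (decomp X)) // Jac_add // S addr0 Jac_cyc.
all: rewrite (Jac_congr _ _ hm (decomp Y)) // Jac_add // S addr0 Jac_cyc.
all: rewrite (Jac_congr _ _ hm (decomp Z)) // Jac_add // S addr0 Jac_c0 // HJ //.
Qed.


Definition Dr X Y m := tbr F (tom F G X) Y m + tbr F X (tbr F X Y) m.
Definition Rl s x y := \sum_(i < s.+1) F i (G (s - i)%N x) y.
Definition Rr s x y := \sum_(i < s.+1) F i x (F (s - i)%N x y).

Lemma teq_tom X X' : teq n X X' -> teq n (tom F G X) (tom F G X').
Proof. by move=> h j hj; apply: tom_congr; apply: teq_le hj. Qed.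

Lemma Dr_congr X X' Y m : (m <= n)%N -> teq n X X' -> Dr X Y m = Dr X' Y m.
Proof.
move=> hm h; rewrite /Dr; congr (_ + _); apply: tbr_congr' => //.
  exact: teq_tom.
by move=> j hj; apply: tbr_congr'.
Qed.

Lemma Dr_congr_r X Y Y' m : (m <= n)%N -> teq n Y Y' -> Dr X Y m = Dr X Y' m.
Proof.
move=> hm h; rewrite /Dr; congr (_ + _); apply: tbr_congr' => //.
by move=> j hj; apply: tbr_congr'.
Qed.

Lemma Dr_add U V Y m : (m <= n)%N -> Dr (tadd U V) Y m = Dr U Y m + Dr V Y m.
Proof.
move=> hm; rewrite /Dr.
rewrite (tbr_congr' (X := tom F G (tadd U V))
   (X' := tadd (tadd (tom F G U) (tom F G V)) (tbr F U V)) (Y := Y) (Y' := Y)) //;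
  last by move=> j hj; rewrite tom_add.
rewrite (tbr_congr' (X := tadd U V) (X' := tadd U V) (Y := tbr F (tadd U V) Y)
   (Y' := tadd (tbr F U Y) (tbr F V Y))) //; last exact: teq_tbr_addl.
rewrite !tbr_addl // !tbr_addr // ac7.
have J := Jac_zero hm U V Y; rewrite /Jac in J.
rewrite (tbr_congr' (X := V) (X' := V) (Y := tbr F Y U) (Y' := tbr F U Y)) // in J;
  last exact: teq_tbr_sym.
by rewrite [tbr F Y _ m]tbr_sym // in J; rewrite J addr0.
Qed.

Lemma Dr_addr X Y1 Y2 m : (m <= n)%N -> Dr X (tadd Y1 Y2) m = Dr X Y1 m + Dr X Y2 m.
Proof.
move=> hm; rewrite /Dr tbr_addr //.
rewrite (tbr_congr' (X := X) (X' := X) (Y := tbr F X (tadd Y1 Y2))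
   (Y' := tadd (tbr F X Y1) (tbr F X Y2))) //; last exact: teq_tbr_addr.
by rewrite tbr_addr // addrACA.
Qed.

Lemma Dr_sh U Y m : (m <= n)%N -> Dr (sh U) Y m = sh (sh (fun j => Dr U Y j)) m.
Proof.
move=> hm; rewrite /Dr.
rewrite (tbr_congr' (X := tom F G (sh U)) (X' := sh (sh (tom F G U))) (Y := Y) (Y' := Y)) //;
  last by move=> j hj; rewrite tom_sh.
rewrite tbr_shl // tbr_shl //.
have E1 : sh (tbr F (sh (tom F G U)) Y) m = sh (sh (tbr F (tom F G U) Y)) m.
  by apply: (sh_congr (teq_le (teq_tbr_shl _ _) hm)).
have E2 : sh (tbr F U (tbr F (sh U) Y)) m = sh (sh (tbr F U (tbr F U Y))) m.
  apply: (sh_congr (m := m) (U := fun j => tbr F U (tbr F (sh U) Y) j)) => // j hj.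
  have hj' : (j <= n)%N by lia.
  by rewrite (tbr_congr' (X := U) (X' := U) (Y := tbr F (sh U) Y) (Y' := sh (tbr F U Y))
     hj' (fun _ _ => erefl) (teq_tbr_shl U Y)) tbr_shr.
rewrite E1 E2.
by case: (m) => [|[|j]] /=; rewrite ?addr0.
Qed.

Lemma Dr_shr X Y m : (m <= n)%N -> Dr X (sh Y) m = sh (fun j => Dr X Y j) m.
Proof.
move=> hm; rewrite /Dr tbr_shr //.
rewrite (tbr_congr' (X := X) (X' := X) (Y := tbr F X (sh Y)) (Y' := sh (tbr F X Y))) //;
  last exact: teq_tbr_shr.
by rewrite tbr_shr //; case: (m) => [|j] /=; rewrite ?addr0.
Qed.

Lemma Dr_c0 x y m : (m <= n)%N -> Dr (c0 x) (c0 y) m = Rl m x y + Rr m x y.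
Proof.
move=> hm; rewrite /Dr tbr_c0r // tbr_c0l //; congr (_ + _); apply: eq_bigr => i _.
  by rewrite tom_c0 //; bnd.
by rewrite tbr_c0c0 //; bnd.
Qed.

Hypothesis HR : forall s, (s <= n)%N -> forall x y, Rl s x y = Rr s x y.

Lemma Dr_zero m : (m <= n)%N -> forall X Y, Dr X Y m = 0.
Proof.
elim/ltn_ind: m => m IH hm X Y.
rewrite (Dr_congr _ hm (decomp X)) Dr_add // Dr_sh //.
have -> : sh (sh (fun j => Dr (fun j0 => X j0.+1) Y j)) m = 0.
  by case: (m) IH hm => [|[|j]] IH hm //=; apply: IH; lia.
rewrite addr0 (Dr_congr_r _ hm (decomp Y)) Dr_addr // Dr_shr //.
have -> : sh (fun j => Dr (c0 (X 0%N)) (fun j0 => Y j0.+1) j) m = 0.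
  by case: (m) IH hm => [|j] IH hm //=; apply: IH; lia.
by rewrite addr0 Dr_c0 // HR // addxxA.
Qed.

Lemma restr X Y m : (m <= n)%N -> tbr F (tom F G X) Y m = tbr F X (tbr F X Y) m.
Proof. by move=> hm; apply/addA_eq0; exact: Dr_zero. Qed.


Lemma rlt_of : restricted_lie_trunc n (tbr F) (tom F G).
Proof.
split; [|split; [|split; [|split; [|split; [|split; [|split; [|split]]]]]]].
- by move=> X Y Z m hm; apply: tbr_addl.
- by move=> X Y Z m hm; apply: tbr_addr.
- by move=> l X Y m hm; apply: tbr_tscale.
- by move=> l X Y m hm; apply: tbr_tscaler.
- by move=> X m hm; apply: tbr_alt.
- by move=> X Y Z m hm; apply: (Jac_zero hm X Y Z).
- by move=> l X m hm; apply: tom_tscale.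
- by move=> X Y m hm; apply: tom_add.
- by move=> X Y m hm; apply: restr.
Qed.

End Seq.

Section Conv.
Variables (n : nat) (F : nat -> A -> A -> A) (G : nat -> A -> A).
Hypothesis HF : forall i, (i <= n)%N -> bilinear_alt (F i).
Hypothesis HGs : forall i, (i <= n)%N -> forall (a : K) x, G i (a *: x) = a ^+ 2 *: G i x.
Hypothesis H : restricted_lie_trunc n (tbr F) (tom F G).

Lemma Jc_of s x y z : (s <= n)%N -> Jc F s x y z = 0.
Proof.
move=> hs; case: H => _ [_ [_ [_ [_ [HJac _]]]]].
by rewrite -(Jac_c0 HF) //; apply: (HJac (c0 x) (c0 y) (c0 z) s hs).
Qed.

Lemma R_of s x y : (s <= n)%N -> Rl F G s x y = Rr F s x y.
Proof.
move=> hs; case: H => _ [_ [_ [_ [_ [_ [_ [_ Hres]]]]]]].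
have E := Hres (c0 x) (c0 y) s hs.
have E1 : Rl F G s x y = tbr F (tom F G (c0 x)) (c0 y) s.
  rewrite (tbr_c0r HF) //; apply: eq_bigr => i _; rewrite (tom_c0 HF HGs) //.
  by have := ltn_ord i; lia.
have E2 : Rr F s x y = tbr F (c0 x) (tbr F (c0 x) (c0 y)) s.
  rewrite (tbr_c0l HF) //; apply: eq_bigr => i _; rewrite (tbr_c0c0 HF) //.
  by have := ltn_ord i; lia.
by rewrite E1 E2.
Qed.
End Conv.
End Gen.

Section Main.
Variables (K : fieldType) (A : lmodType K) (mul br : A -> A -> A) (p : A -> A)
  (mu : nat -> A -> A -> A) (om : nat -> A -> A).
Hypothesis Hc2 : (2%:R : K) = 0.
Hypothesis hP : restricted_poisson mul br p.

Lemma br_ba : bilinear_alt br.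
Proof. by case: hP => _ [[hb _] _ _ _] _ _. Qed.
Lemma p_scl a x : p (a *: x) = a ^+ 2 *: p x.
Proof. by case: hP => _ [_ h _ _] _ _. Qed.
Lemma p_add x y : p (x + y) = p x + p y + br x y.
Proof. by case: hP => _ [_ _ _ h] _ _. Qed.

Definition Cfam N := forall i, (1 <= i <= N)%N -> C2PA mul (mu i) (om i).

Lemma HF_of N : Cfam N -> forall i, (i <= N)%N -> bilinear_alt (fam br mu i).
Proof.
move=> hC [|i] hi; rewrite /fam /=; first exact: br_ba.
by case: (hC i.+1 ltac:(lia)) => [[hb _ _] _ _ _].
Qed.

Lemma HGs_of N : Cfam N -> forall i, (i <= N)%N ->
  forall (a : K) x, famo p om i (a *: x) = a ^+ 2 *: famo p om i x.
Proof.
move=> hC [|i] hi; rewrite /famo /=; first exact: p_scl.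
by case: (hC i.+1 ltac:(lia)) => _ h _ _.
Qed.

Lemma HGa_of N : Cfam N -> forall i, (i <= N)%N ->
  forall x y, famo p om i (x + y) = famo p om i x + famo p om i y + fam br mu i x y.
Proof.
move=> hC [|i] hi; rewrite /famo /fam /=; first exact: p_add.
by case: (hC i.+1 ltac:(lia)) => _ _ h _.
Qed.

Lemma acJ (a b c S d e f : A) :
  a + b + c + (S + (d + e + f)) = S + (f + e + d + a + b + c).
Proof.
rewrite addrCA; congr (_ + _); rewrite addrC !addrA; congr (_ + _ + _ + _).
by rewrite addrC (addrC d e) addrA.
Qed.

Lemma J_obs k x y z : Cfam k.+1 ->
  Jc (fam br mu) k.+1 x y z = obs1 mu k x y z + dCE br (mu k.+1) x y z.
Proof.
move=> hC.
have hmu : bilinear_alt (mu k.+1) by case: (hC k.+1 ltac:(lia)) => [[h _ _] _ _ _].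
have hb := br_ba.
rewrite /Jc /obs1 /dCE big_ord_recl big_ord_recr /= big_add1 /= big_mkord.
rewrite (eq_bigr (fun i : 'I_k => mu i.+1 x (mu (k.+1 - i.+1) y z)
   + mu i.+1 y (mu (k.+1 - i.+1) z x) + mu i.+1 z (mu (k.+1 - i.+1) x y))); last first.
  move=> i _; have hi := ltn_ord i; rewrite /bump /fam /= add1n !subSS.
  by have -> : (k - i == 0)%N = false by lia.
rewrite /bump /= add1n subnn subn0 /fam /=.
rewrite (ba_sym Hc2 hmu (br x y) z) (ba_sym Hc2 hmu (br x z) y) (ba_sym Hc2 hmu (br y z) x).
rewrite (ba_sym Hc2 hmu x z) (ba_sym Hc2 hb x z).
exact: acJ.
Qed.

Lemma acR (A1 ML A2 B1 MR B2 : A) :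
  A1 + (ML + A2) + (B1 + (MR + B2)) = ML + MR + (B1 + A1 + A2 + B2).
Proof.
rewrite (addrCA A1 ML A2) -!addrA; congr (_ + _).
rewrite (addrCA B1 MR B2) (addrCA A2 MR) (addrCA A1 MR); congr (_ + _).
by rewrite (addrCA A2 B1 B2) (addrCA A1 B1).
Qed.

Lemma R_obs k x y : Cfam k.+1 ->
  Rl (fam br mu) (famo p om) k.+1 x y + Rr (fam br mu) k.+1 x y =
  obs2 mu om k x y + delta2 br p (mu k.+1) (om k.+1) x y.
Proof.
move=> hC.
have hmu : bilinear_alt (mu k.+1) by case: (hC k.+1 ltac:(lia)) => [[h _ _] _ _ _].
have hb := br_ba.
have EL : Rl (fam br mu) (famo p om) k.+1 x y =
    br (om k.+1 x) y + (\sum_(i < k) mu i.+1 (om (k - i)%N x) y + mu k.+1 (p x) y).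
  rewrite /Rl big_ord_recl big_ord_recr /= /bump /= add1n subnn subn0 /fam /famo /=.
  congr (_ + (_ + _)); apply: eq_bigr => i _; rewrite add1n subSS /=.
  by have -> : (k - i == 0)%N = false by have := ltn_ord i; lia.
have ER : Rr (fam br mu) k.+1 x y =
    br x (mu k.+1 x y) + (\sum_(i < k) mu i.+1 x (mu (k - i)%N x y) + mu k.+1 x (br x y)).
  rewrite /Rr big_ord_recl big_ord_recr /= /bump /= add1n subnn subn0 /fam /=.
  congr (_ + (_ + _)); apply: eq_bigr => i _; rewrite add1n subSS /=.
  by have -> : (k - i == 0)%N = false by have := ltn_ord i; lia.
have EO : obs2 mu om k x y =
    \sum_(i < k) mu i.+1 (om (k - i)%N x) y + \sum_(i < k) mu i.+1 x (mu (k - i)%N x y).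
  rewrite /obs2 big_add1 /= big_mkord -big_split; apply: eq_bigr => i _.
  have hi : bilinear_alt (mu i.+1).
    by case: (hC i.+1 ltac:(have := ltn_ord i; lia)) => [[h _ _] _ _ _].
  by rewrite !subSS (ba_sym Hc2 hi y).
rewrite EL ER EO /delta2 (ba_sym Hc2 hb y (om k.+1 x)) (ba_sym Hc2 hmu (br x y) x).
exact: acR.
Qed.

End Main.


Unset Implicit Arguments.

Theorem mainTheorem7 (K : fieldType) (A : lmodType K)
  (mul br : A -> A -> A) (p : A -> A)
  (mu : nat -> A -> A -> A) (om : nat -> A -> A) (k : nat) :
  2%N \in [pchar K] ->
  restricted_poisson mul br p ->
  (1 <= k)%N ->
  formal_deformation mul br p mu om k ->
  C2PA mul (mu k.+1) (om k.+1) ->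
  (formal_deformation mul br p mu om k.+1 <->
   ((forall x y z, obs1 mu k x y z = dCE br (mu k.+1) x y z) /\
    (forall x y, obs2 mu om k x y = delta2 br p (mu k.+1) (om k.+1) x y))).
Proof.
move=> h2 hP hk [hC hD] hCk.
have Hc2 : (2%:R : K) = 0 := pcharf0 h2.
have hC1 : Cfam mul mu om k.+1.
  move=> i hi; case: (ltnP i k.+1) => hi'.
    by apply: hC; lia.
  by have -> : i = k.+1 by lia.
split.
- move=> [_ hD1]; split=> [x y z|x y].
    apply/(addA_eq0 Hc2); rewrite -(J_obs Hc2 hP _ _ _ hC1).
    exact: (Jc_of (HF_of hP hC1) hD1).
  apply/(addA_eq0 Hc2); rewrite -(R_obs Hc2 hP _ _ hC1); apply/(addA_eq0 Hc2).
  exact: (R_of Hc2 (HF_of hP hC1) (HGs_of hP hC1) hD1).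
- move=> [hO1 hO2]; split; first exact: hC1.
  apply: (rlt_of Hc2 (HF_of hP hC1) (HGs_of hP hC1) (HGa_of hP hC1)).
    move=> s hs x y z; case: (ltnP s k.+1) => hs'.
      by apply: (Jc_of (HF_of hP hC) hD); lia.
    have -> : s = k.+1 by lia.
    by rewrite (J_obs Hc2 hP _ _ _ hC1) hO1 addxxA.
  move=> s hs x y; case: (ltnP s k.+1) => hs'.
    by apply: (R_of Hc2 (HF_of hP hC) (HGs_of hP hC) hD); lia.
  have -> : s = k.+1 by lia.
  by apply/(addA_eq0 Hc2); rewrite (R_obs Hc2 hP _ _ hC1) hO2 addxxA.
Qed.
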